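(* Let $0<b<a<n$ and $0<\alpha<1$ with $\alpha n$ an integer. Let $\mathcal D_1$ be the law of $X_1-Y_1$ where $X_1\sim\mathrm{Binom}(\alpha n, a/n)$ and $Y_1\sim\mathrm{Binom}((1-\alpha)n, b/n)$ are independent, and let $\mathcal D_2$ be the law of $X_2-Y_2$ where $X_2\sim\mathrm{Binom}(\alpha n, b/n)$ and $Y_2\sim\mathrm{Binom}((1-\alpha)n, a/n)$ are independent. Let $C=(\sqrt a-\sqrt b)^2$ and $K=(1-2\alpha)n\,D(a/n,b/n)$. Then for every real $\theta$, \[ \max\Big(\Pr_{x\sim\mathcal D_1}[x+K\le\theta],\ \Pr_{x\sim\mathcal D_2}[x+K\ge-\theta]\Big)\le \exp\!\Big(-\frac C2+\frac\theta2\log R(a/n,b/n)\Big). \]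
   Context: $\mathrm{Binom}(m,p)$ denotes the binomial distribution with $m$ trials and success probability $p$. For $0<p,q<1$: $R(p,q)=\frac{p(1-q)}{q(1-p)}$, and for $p\neq q$, $D(p,q)=\dfrac{\log\frac{1-q}{1-p}}{\log R(p,q)}$. *)

(* Defs.v *)
From Stdlib Require Import Reals List.
Import ListNotations.
Open Scope R_scope.

Definition rsum (l : list nat) (f : nat -> R) : R :=
  fold_right Rplus 0 (map f l).

Definition binom_pmf (m : nat) (p : R) (k : nat) : R :=
  C m k * p ^ k * (1 - p) ^ (m - k).

(* Probability that X - Y satisfies the event ev, where X ~ Binom(m1,p1) and
   Y ~ Binom(m2,p2) are independent (joint pmf = product of marginals). *)
Definition diff_prob (m1 : nat) (p1 : R) (m2 : nat) (p2 : R)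
  (ev : R -> bool) : R :=
  rsum (seq 0 (S m1)) (fun i =>
    rsum (seq 0 (S m2)) (fun j =>
      binom_pmf m1 p1 i * binom_pmf m2 p2 j *
      (if ev (INR i - INR j) then 1 else 0))).

Definition Rle_b (x y : R) : bool := if Rle_dec x y then true else false.

Definition Rratio (p q : R) : R := p * (1 - q) / (q * (1 - p)).
Definition Dfun (p q : R) : R := ln ((1 - q) / (1 - p)) / ln (Rratio p q).

(* Main.v *)
Require Import Defs.
From Stdlib Require Import Reals List Lra Lia.
Open Scope R_scope.

Lemma rsum_le l f g : (forall x, f x <= g x) -> rsum l f <= rsum l g.
Proof. intros H; induction l as [|x l IH]; unfold rsum in *; simpl; [lra|]. specialize (H x). lra. Qed.

Lemma rsum_ext l f g : (forall x, f x = g x) -> rsum l f = rsum l g.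
Proof. intros H; induction l as [|x l IH]; unfold rsum in *; simpl; [lra|]. rewrite H, IH; lra. Qed.

Lemma rsum_scal l c f : rsum l (fun x => c * f x) = c * rsum l f.
Proof. induction l as [|x l IH]; unfold rsum in *; simpl; [lra|]. rewrite IH; lra. Qed.

Lemma rsum_cons x l f : rsum (x :: l) f = f x + rsum l f.
Proof. reflexivity. Qed.

Lemma rsum_seq_sum f m k : rsum (seq k (S m)) f = sum_f_R0 (fun i => f (k + i)%nat) m.
Proof.
  revert k; induction m as [|m IH]; intros k.
  - unfold rsum; simpl. rewrite Nat.add_0_r; lra.
  - change (seq k (S (S m))) with (k :: seq (S k) (S m)).
    rewrite rsum_cons, IH.
    rewrite (decomp_sum (fun i => f (k + i)%nat) (S m)) by lia. simpl pred.
    rewrite Nat.add_0_r. f_equal. apply sum_eq. intros i _. f_equal. lia.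
Qed.

Lemma C_nonneg n k : 0 <= C n k.
Proof.
  unfold C. apply Rle_mult_inv_pos. apply pos_INR.
  apply Rmult_lt_0_compat; apply lt_0_INR; apply Factorial.lt_O_fact.
Qed.

Lemma pmf_nonneg m p k : 0 <= p <= 1 -> 0 <= binom_pmf m p k.
Proof.
  intros Hp. unfold binom_pmf. apply Rmult_le_pos. apply Rmult_le_pos.
  apply C_nonneg. apply pow_le; lra. apply pow_le; lra.
Qed.

Lemma rsum_binom m p z :
  rsum (seq 0 (S m)) (fun k => binom_pmf m p k * z ^ k) = (1 - p + p * z) ^ m.
Proof.
  rewrite rsum_seq_sum. replace (1 - p + p * z) with (p * z + (1 - p)) by ring.
  rewrite binomial. apply sum_eq. intros i _. simpl. unfold binom_pmf.
  rewrite Rpow_mult_distr. ring.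
Qed.

Lemma exp_pow k x : exp (INR k * x) = exp x ^ k.
Proof.
  induction k as [|k IH]; simpl pow. simpl. rewrite Rmult_0_l, exp_0; lra.
  rewrite S_INR, Rmult_plus_distr_r, exp_plus, IH, Rmult_1_l. ring.
Qed.

Lemma chernoff (m1 : nat) (p1 : R) (m2 : nat) (p2 : R) (ev : R -> bool) (c u v : R) :
  0 <= p1 <= 1 -> 0 <= p2 <= 1 ->
  (forall i j : nat, (if ev (INR i - INR j) then 1 else 0) <= c * u ^ i * v ^ j) ->
  diff_prob m1 p1 m2 p2 ev <= c * (1 - p1 + p1 * u) ^ m1 * (1 - p2 + p2 * v) ^ m2.
Proof.
  intros H1 H2 H. unfold diff_prob.
  eapply Rle_trans.
  - apply rsum_le. intros i. apply rsum_le. intros j.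
    apply Rmult_le_compat_l. apply Rmult_le_pos; apply pmf_nonneg; auto. apply H.
  - rewrite <- (rsum_binom m1 p1 u), <- (rsum_binom m2 p2 v). right.
    set (Y := rsum (seq 0 (S m2)) (fun k => binom_pmf m2 p2 k * v ^ k)).
    rewrite (rsum_ext _ _ (fun i => (c * (binom_pmf m1 p1 i * u ^ i)) * Y)).
    + rewrite (rsum_ext _ _ (fun i => (c * Y) * (binom_pmf m1 p1 i * u ^ i))) by (intro; ring).
      rewrite rsum_scal. ring.
    + intros i. unfold Y. rewrite <- rsum_scal. apply rsum_ext. intros j. ring.
Qed.

Lemma sqrt_facts x : 0 < x -> 0 < sqrt x /\ sqrt x * sqrt x = x.
Proof. intros H. split. apply sqrt_lt_R0; lra. apply sqrt_sqrt; lra. Qed.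

Lemma Sbound (n : nat) (A B A' B' : R) :
  0 < A -> 0 < B -> 0 < A' -> 0 < B' ->
  A' * A' = 1 - A * A -> B' * B' = 1 - B * B ->
  (A' * B' + A * B) ^ n <= exp (- (INR n * (A - B) ^ 2) / 2).
Proof.
  intros HA HB HA' HB' E1 E2.
  replace (- (INR n * (A - B) ^ 2) / 2) with (INR n * (- (A - B) ^ 2 / 2)) by field.
  rewrite exp_pow. apply pow_incr. split.
  - nra.
  - eapply Rle_trans; [|apply exp_ineq1_le]. assert (0 <= (A' - B') ^ 2) by apply pow2_ge_0. nra.
Qed.

Theorem mainTheorem5 (n m : nat) (a b alpha theta : R)
  (hb : 0 < b) (hba : b < a) (han : a < INR n)
  (hal0 : 0 < alpha) (hal1 : alpha < 1) (hm : alpha * INR n = INR m) :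
  let Cc := (sqrt a - sqrt b) ^ 2 in
  let K := (1 - 2 * alpha) * INR n * Dfun (a / INR n) (b / INR n) in
  Rmax
    (diff_prob m (a / INR n) (n - m) (b / INR n)
       (fun x => Rle_b (x + K) theta))
    (diff_prob m (b / INR n) (n - m) (a / INR n)
       (fun x => Rle_b (- theta) (x + K)))
  <= exp (- Cc / 2 + theta / 2 * ln (Rratio (a / INR n) (b / INR n))).
Proof.
  intros Cc K.
  assert (Hn : 0 < INR n) by lra.
  assert (Hmn : INR m < INR n) by nra.
  assert (Hmn' : (m <= n)%nat) by (apply INR_le; lra).
  assert (Hnm : INR (n - m) = INR n - INR m) by (apply minus_INR; auto).
  set (p := a / INR n). set (q := b / INR n).
  assert (Hq0 : 0 < q) by (unfold q; apply Rdiv_lt_0_compat; lra).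
  assert (Hpq : q < p) by (unfold p, q; apply Rmult_lt_compat_r; [apply Rinv_0_lt_compat|]; lra).
  assert (Hp1 : p < 1) by (unfold p; apply (Rmult_lt_reg_r (INR n)); [lra|]; field_simplify; lra).
  assert (HC : Cc = INR n * (sqrt p - sqrt q) ^ 2).
  { unfold Cc. replace a with (INR n * p) by (unfold p; field; lra).
    replace b with (INR n * q) by (unfold q; field; lra).
    rewrite !sqrt_mult by lra.
    replace (INR n) with (sqrt (INR n) * sqrt (INR n)) at 3 by (apply sqrt_sqrt; lra). ring. }
  assert (HK : K = (INR n - 2 * INR m) * Dfun p q) by (unfold K, p, q; rewrite <- hm; ring).
  clearbody Cc K p q. subst Cc K. clear hm hal0 hal1 alpha.
  clear a b hb hba han.
  destruct (sqrt_facts p) as [HA0 HA]; [lra|].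
  destruct (sqrt_facts q) as [HB0 HB]; [lra|].
  destruct (sqrt_facts (1 - p)) as [HA'0 HA']; [lra|].
  destruct (sqrt_facts (1 - q)) as [HB'0 HB']; [lra|].
  set (A := sqrt p) in *. set (B := sqrt q) in *.
  set (A' := sqrt (1 - p)) in *. set (B' := sqrt (1 - q)) in *.
  clearbody A B A' B'. subst p q.
  assert (HAB : B < A) by nra.
  assert (HAB' : A' < B') by nra.
  set (w := A * B' / (B * A')). set (y := B' / A'). set (S := A' * B' + A * B).
  assert (Hy : 0 < y) by (unfold y; apply Rdiv_lt_0_compat; lra).
  assert (Hw : 1 < w).
  { replace w with (1 + (A * B' - B * A') / (B * A')) by (unfold w; field; lra).
    assert (0 < (A * B' - B * A') / (B * A')); [|lra].
    apply Rdiv_lt_0_compat; nra. }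
  assert (Hlw : 0 < ln w) by (rewrite <- ln_1; apply ln_increasing; lra).
  assert (HR : Rratio (A * A) (B * B) = w * w).
  { unfold Rratio, w. rewrite <- HA', <- HB'. field. repeat split; lra. }
  assert (HD : Dfun (A * A) (B * B) = (ln y + ln y) / (ln w + ln w)).
  { unfold Dfun. rewrite HR, <- HA', <- HB', <- !ln_mult by lra. f_equal. f_equal.
    unfold y. field. lra. }
  rewrite HR, HD. rewrite ln_mult by lra.
  set (lw := ln w) in *.
  set (K0 := (INR n - 2 * INR m) * ((ln y + ln y) / (lw + lw))).
  assert (HlK : lw * K0 = (INR n - 2 * INR m) * ln y) by (unfold K0; field; lra).
  assert (Hu : exp (- lw) = / w) by (rewrite exp_Ropp; unfold lw; rewrite exp_ln; lra).
  assert (Hv : exp lw = w) by (unfold lw; rewrite exp_ln; lra).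
  assert (E1 : 1 - A * A + A * A * / w = S / y).
  { rewrite <- HA'. unfold S, y, w. field. repeat split; lra. }
  assert (E2 : 1 - B * B + B * B * w = S * y).
  { rewrite <- HB'. unfold S, y, w. field. repeat split; lra. }
  assert (HS := Sbound n A B A' B' HA0 HB0 HA'0 HB'0 HA' HB').
  fold S in HS.
  assert (Hsplit : (m + (n - m))%nat = n) by lia.
  apply Rmax_lub.
  - eapply Rle_trans.
    + apply (chernoff _ _ _ _ _ (exp (lw * (theta - K0))) (exp (- lw)) (exp lw)); [nra|nra|].
      intros i j. unfold Rle_b. rewrite <- !exp_pow, <- !exp_plus.
      destruct (Rle_dec (INR i - INR j + K0) theta) as [Hle|Hle].
      * eapply Rle_trans; [|apply exp_ineq1_le].
        assert (0 <= lw * (theta - K0 - (INR i - INR j))) by (apply Rmult_le_pos; lra).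
        nra.
      * left. apply exp_pos.
    + rewrite Hu, Hv, E1, E2.
      replace (lw * (theta - K0)) with (lw * theta + (INR m * ln y + INR (n - m) * ln (/ y)))
        by (rewrite Rmult_minus_distr_l, HlK, Hnm, ln_Rinv by lra; ring).
      rewrite !exp_plus, !exp_pow, !exp_ln by (try apply Rinv_0_lt_compat; lra).
      replace (exp (lw * theta) * (y ^ m * (/ y) ^ (n - m)) * (S / y) ^ m * (S * y) ^ (n - m))
        with (exp (lw * theta) * ((y * (S / y)) ^ m * (/ y * (S * y)) ^ (n - m)))
        by (rewrite !Rpow_mult_distr; ring).
      replace (y * (S / y)) with S by (field; lra).
      replace (/ y * (S * y)) with S by (field; lra).
      rewrite <- pow_add, Hsplit.
      replace (theta / 2 * (lw + lw)) with (lw * theta) by field.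
      rewrite Rmult_comm. apply Rmult_le_compat_r; [left; apply exp_pos|exact HS].
  - eapply Rle_trans.
    + apply (chernoff _ _ _ _ _ (exp (lw * (theta + K0))) (exp lw) (exp (- lw))); [nra|nra|].
      intros i j. unfold Rle_b. rewrite <- !exp_pow, <- !exp_plus.
      destruct (Rle_dec (- theta) (INR i - INR j + K0)) as [Hle|Hle].
      * eapply Rle_trans; [|apply exp_ineq1_le].
        assert (0 <= lw * (theta + K0 + (INR i - INR j))) by (apply Rmult_le_pos; lra).
        nra.
      * left. apply exp_pos.
    + rewrite Hu, Hv, E1, E2.
      replace (lw * (theta + K0)) with (lw * theta + (INR m * ln (/ y) + INR (n - m) * ln y))
        by (rewrite Rmult_plus_distr_l, HlK, Hnm, ln_Rinv by lra; ring).
      rewrite !exp_plus, !exp_pow, !exp_ln by (try apply Rinv_0_lt_compat; lra).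
      replace (exp (lw * theta) * ((/ y) ^ m * y ^ (n - m)) * (S * y) ^ m * (S / y) ^ (n - m))
        with (exp (lw * theta) * ((/ y * (S * y)) ^ m * (y * (S / y)) ^ (n - m)))
        by (rewrite !Rpow_mult_distr; ring).
      replace (y * (S / y)) with S by (field; lra).
      replace (/ y * (S * y)) with S by (field; lra).
      rewrite <- pow_add, Hsplit.
      replace (theta / 2 * (lw + lw)) with (lw * theta) by field.
      rewrite Rmult_comm. apply Rmult_le_compat_r; [left; apply exp_pos|exact HS].
Qed.
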